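(* Let $d>1$ and $n\ge d$ be integers. For every $A\subseteq\mathbb{F}_2^n$, \[\lambda^*(n,d,2^{d-1},A)\le 1-\frac{\binom{n-1}{d}_2}{\binom{n}{d}_2}.\] Moreover, equality holds when $A=\{x\in\mathbb{F}_2^n:\sum_{i=1}^n x_i=0\}$, and consequently $\lambda^*(d,2^{d-1})=1-2^{-d}$.
   Context: For integers $n\ge d\ge 1$, a $d$-flat in $\mathbb{F}_2^n$ is a set $x_0+U$ with $x_0\in\mathbb{F}_2^n$ and $U$ a $d$-dimensional linear subspace of $\mathbb{F}_2^n$. For $A\subseteq\mathbb{F}_2^n$ and an integer $0\le s\le 2^d$, $\lambda^*(n,d,s,A)$ denotes the fraction of $d$-flats $Q$ in $\mathbb{F}_2^n$ with $|Q\cap A|=s$. Let $\lambda^*(n,d,s)=\max_{A}\lambda^*(n,d,s,A)$ and $\lambda^*(d,s)=\lim_{n\to\infty}\lambda^*(n,d,s)$. The Gaussian binomial coefficient is $\binom{n}{d}_2=\prod_{i=0}^{d-1}\frac{2^{n-i}-1}{2^{d-i}-1}$, the number of $d$-dimensional linear subspaces of $\mathbb{F}_2^n$. *)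

(* Defs.v *)
From HB Require Import structures.
From mathcomp Require Import all_boot all_order all_algebra all_fingroup.
Set Implicit Arguments. Unset Strict Implicit. Unset Printing Implicit Defensive.
Import Order.TTheory GRing.Theory Num.Theory.
Local Open Scope ring_scope.

Notation vec n := ('rV['F_2]_n) (only parsing).

(* Q is a d-flat: Q = x0 + U with U a d-dimensional linear subspace, where U
   is presented as the row space of a d x n matrix of rank d. *)
Definition is_flat (n d : nat) (Q : {set 'rV['F_2]_n}) : bool :=
  [exists x0 : 'rV['F_2]_n, exists B : 'M['F_2]_(d, n),
     (\rank B == d) && (Q == [set x0 + v | v in [set v : 'rV['F_2]_n | (v <= B)%MS]])].

Definition flats (n d : nat) : {set {set 'rV['F_2]_n}} :=
  [set Q | is_flat d Q].

Definition lam (n d s : nat) (A : {set 'rV['F_2]_n}) : rat :=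
  (#|[set Q in flats n d | #|Q :&: A| == s]|)%:R / (#|flats n d|)%:R.

Definition lamstar (n d s : nat) : rat :=
  \big[Num.max/0]_(A : {set 'rV['F_2]_n}) lam d s A.

Definition lamstar_limit (d s : nat) (L : rat) : Prop :=
  forall eps : rat, 0 < eps ->
    exists N : nat, forall n : nat, (N <= n)%N -> `|lamstar n d s - L| < eps.

Definition gbin (n d : nat) : rat :=
  \prod_(i < d) ((2 ^+ (n - i) - 1) / (2 ^+ (d - i) - 1)).

Definition parity_set (n : nat) : {set 'rV['F_2]_n} :=
  [set x : 'rV['F_2]_n | \sum_(i < n) x ord0 i == 0].

(* Main.v *)
Require Import Defs.
From HB Require Import structures.
From mathcomp Require Import all_boot all_order all_algebra all_fingroup.
From mathcomp Require Import zify ring lra.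
Set Implicit Arguments. Unset Strict Implicit. Unset Printing Implicit Defensive.
Import Order.TTheory GRing.Theory Num.Theory.
Local Open Scope ring_scope.

Lemma F2_nz1 (a : 'F_2) : a != 0 -> a = 1.
Proof. by case: a => [[|[|//]]] //= H _; apply/val_inj. Qed.

Lemma mx11_unit_F2 (c : 'M['F_2]_1) : c \in unitmx -> c = 1%:M.
Proof.
rewrite unitmxE unitfE det_mx11 => /F2_nz1 h.
by rewrite [c]mx11_scalar h.
Qed.

Lemma rv_basis n (u : 'rV['F_2]_n) : u != 0 ->
  exists P : 'M['F_2]_n, P \in unitmx /\ u = pid_mx 1 *m P.
Proof.
move=> nz; exists (row_ebase u); split; first exact: row_ebase_unit.
have := mulmx_ebase u; rewrite rank_rV nz /= => {1}<-.
by rewrite (mx11_unit_F2 (col_ebase_unit u)) mul1mx.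
Qed.

Lemma rv_trans n (u u' : 'rV['F_2]_n) : u != 0 -> u' != 0 ->
  exists M : 'M['F_2]_n, M \in unitmx /\ u *m M = u'.
Proof.
move=> /rv_basis [P [uP eP]] /rv_basis [P' [uP' eP']].
exists (invmx P *m P'); split; first by rewrite unitmx_mul unitmx_inv uP.
by rewrite eP mulmxA -(mulmxA _ P) mulmxV // mulmx1 eP'.
Qed.

Section Aff.
Variables (n d : nat).
Local Notation V := 'rV['F_2]_n.

Definition Kc (x y : V) : nat := #|[set Q in flats n d | (x \in Q) && (y \in Q)]|.

Lemma flat_aff (M : 'M['F_2]_n) (b : V) (Q : {set V}) : M \in unitmx ->
  Q \in flats n d -> [set x *m M + b | x in Q] \in flats n d.
Proof.
move=> uM; rewrite !inE => /existsP [x0 /existsP [B /andP [rB /eqP eQ]]].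
apply/existsP; exists (x0 *m M + b); apply/existsP; exists (B *m M).
rewrite mxrankMfree ?row_free_unit // rB /=; apply/eqP/setP => z.
apply/imsetP/imsetP.
- move=> [x]; rewrite eQ => /imsetP [v]; rewrite inE => vB -> ->.
  exists (v *m M); first by rewrite inE submxMr.
  by rewrite mulmxDl addrAC.
- move=> [w]; rewrite inE => wB ->.
  exists (x0 + w *m invmx M); last by rewrite mulmxDl -mulmxA mulVmx // mulmx1 addrAC.
  rewrite eQ; apply/imsetP; exists (w *m invmx M) => //.
  rewrite inE -[B](mulmxK uM); exact: submxMr.
Qed.

Lemma Kc_aff (M : 'M['F_2]_n) (b : V) x y : M \in unitmx ->
  (Kc x y <= Kc (x *m M + b) (y *m M + b))%N.
Proof.
move=> uM.
have injf : injective (fun x : V => x *m M + b).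
  by move=> u v /addIr /(row_free_inj (introT idP _)) ; rewrite row_free_unit => /(_ uM).
rewrite /Kc -(card_imset _ (imset_inj injf)).
apply: subset_leq_card; apply/subsetP => Q' /imsetP [Q]; rewrite !inE.
move=> /andP [fQ /andP [xQ yQ]] ->.
have := flat_aff b uM (Q := Q); rewrite !inE => ->; last by [].
by rewrite /=; apply/andP; split; [apply/imsetP; exists x | apply/imsetP; exists y].
Qed.

Lemma Kc_const (x y x' y' : V) : x != y -> x' != y' -> Kc x y = Kc x' y'.
Proof.
have H : forall (x y x' y' : V), x != y -> x' != y' -> (Kc x y <= Kc x' y')%N.
  move=> a b a' b' nab nab'.
  have n1 : b - a != 0 by rewrite subr_eq0 eq_sym.
  have n2 : b' - a' != 0 by rewrite subr_eq0 eq_sym.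
  have [M [uM eM]] := rv_trans n1 n2.
  have := Kc_aff (a' - a *m M) a b uM.
  have -> : a *m M + (a' - a *m M) = a' by rewrite addrC subrK.
  suff -> : b *m M + (a' - a *m M) = b' by [].
  have -> : b = a + (b - a) by rewrite addrC subrK.
  by rewrite mulmxDl eM addrAC [a *m M + _]addrC subrK addrC subrK.
by move=> nxy nxy'; apply/eqP; rewrite eqn_leq !H.
Qed.

End Aff.

Section Card.
Variables (n d : nat).
Local Notation V := 'rV['F_2]_n.

Lemma card_span (B : 'M['F_2]_(d, n)) : \rank B = d ->
  #|[set v : V | (v <= B)%MS]| = (2 ^ d)%N.
Proof.
move=> rB.
have fB : row_free B by rewrite /row_free rB.
have -> : [set v : V | (v <= B)%MS] = [set w *m B | w in [set: 'rV['F_2]_d]].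
  apply/setP => v; rewrite inE; apply/submxP/imsetP.
  - by move=> [w ->]; exists w.
  - by move=> [w _ ->]; exists w.
rewrite card_imset; last exact: row_free_inj.
by rewrite cardsT card_mx card_Fp // mul1n.
Qed.

Lemma card_flat (Q : {set V}) : Q \in flats n d -> #|Q| = (2 ^ d)%N.
Proof.
rewrite inE => /existsP [x0 /existsP [B /andP [/eqP rB /eqP ->]]].
by rewrite card_imset ?card_span //; apply: addrI.
Qed.

Definition ell (x : V) : 'F_2 := \sum_(i < n) x ord0 i.

Lemma ellD x y : ell (x + y) = ell x + ell y.
Proof. by rewrite /ell -big_split; apply: eq_bigr => i _; rewrite mxE. Qed.

Lemma in_par x : (x \in parity_set n) = (ell x == 0).
Proof. by rewrite inE. Qed.

Lemma inv_half (S : {set V}) (u0 : V) : ell u0 != 0 ->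
  (forall z, z \in S -> z + u0 \in S) ->
  #|S :&: parity_set n| = #|S :\: parity_set n|.
Proof.
move=> /F2_nz1 e1 cS.
have ie : injective (fun z : V => z + u0) by apply: addIr.
have key : forall z, (z + u0 \in parity_set n) = (z \notin parity_set n).
  move=> z; rewrite !in_par ellD e1.
  by case: (ell z) => [[|[|//]]] //= H.
apply/eqP; rewrite eqn_leq; apply/andP; split.
- rewrite -(card_imset _ ie); apply: subset_leq_card; apply/subsetP => w.
  move=> /imsetP [z]; rewrite ?in_setI ?in_setD => /andP [zS zP] ->.
  by rewrite key zP cS.
- rewrite -(card_imset _ ie); apply: subset_leq_card; apply/subsetP => w.
  move=> /imsetP [z]; rewrite ?in_setI ?in_setD => /andP [zP zS] ->.
  by rewrite key zP cS.
Qed.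

End Card.

Section Par.
Variables (n d : nat).
Local Notation V := 'rV['F_2]_n.
Local Notation H := (parity_set n).

Lemma flat_par (Q : {set V}) : (0 < d)%N -> Q \in flats n d ->
  #|Q :&: H| = (2 ^ d.-1)%N \/ (#|Q :&: H| * #|Q :\: H| = 0)%N.
Proof.
move=> d0 fQ; have cQ := card_flat fQ.
move: fQ; rewrite inE => /existsP [x0 /existsP [B /andP [/eqP rB /eqP eQ]]].
case: (boolP [exists u in [set v : V | (v <= B)%MS], ell u != 0]).
- move=> /existsP [u0 /andP [u0B nz]]; left.
  have := inv_half (S := Q) nz.
  have cS : forall z, z \in Q -> z + u0 \in Q.
    move=> z; rewrite eQ => /imsetP [v vB ->].
    apply/imsetP; exists (v + u0); last by rewrite addrA.
    by move: vB u0B; rewrite !inE; apply: addmx_sub.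
  move=> /(_ cS) e.
  have := cardsID H Q; rewrite -e cQ.
  case: d d0 {rB cQ B eQ u0B} => // k _ /=; rewrite expnS; lia.
- rewrite negb_exists => /forallP al; right.
  have ez : forall z, z \in Q -> ell z = ell x0.
    move=> z; rewrite eQ => /imsetP [v vB ->]; rewrite ellD.
    by have := al v; rewrite vB /= negbK => /eqP ->; rewrite addr0.
  case: (boolP (ell x0 == 0)) => h.
  + suff -> : #|Q :\: H| = 0%N by rewrite muln0.
    apply/eqP; rewrite cards_eq0; apply/eqP/setP => z; rewrite !inE.
    case zQ: (z \in Q); last by rewrite andbF.
    by rewrite andbT -/(ell z) ez // h.
  + suff -> : #|Q :&: H| = 0%N by rewrite mul0n.
    apply/eqP; rewrite cards_eq0; apply/eqP/setP => z; rewrite !inE.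
    case zQ: (z \in Q); last by rewrite ?andbF.
    by have := ez z zQ; rewrite /ell /= => ->; apply: negbTE.
Qed.

End Par.

Section DC.
Variables (n d : nat).
Local Notation V := 'rV['F_2]_n.
Local Notation F := (flats n d).

Lemma sum_ind (T : finType) (S : {set T}) : (\sum_x ((x \in S) : nat) = #|S|)%N.
Proof.
rewrite -sum1_card [RHS]big_mkcond; apply: eq_bigr => x _.
by case: (x \in S).
Qed.

Lemma Kc_sum (x y : V) : Kc d x y = (\sum_(Q in F) ((x \in Q) && (y \in Q)))%N.
Proof.
rewrite /Kc -sum1_card [LHS]big_mkcond [RHS]big_mkcond; apply: eq_bigr => Q _.
rewrite !inE; by case: (is_flat d Q); case: (x \in Q); case: (y \in Q).
Qed.

Lemma dc (x1 y1 : V) (P : V -> V -> bool) : x1 != y1 ->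
  (forall x y, P x y -> x != y) ->
  (\sum_(Q in F) \sum_x \sum_y ((x \in Q) && (y \in Q) && P x y)
   = Kc d x1 y1 * \sum_x \sum_y P x y)%N.
Proof.
move=> n1 hP; rewrite exchange_big big_distrr; apply: eq_bigr => x _ /=.
rewrite exchange_big big_distrr; apply: eq_bigr => y _ /=.
case Pxy: (P x y).
- rewrite muln1 -(Kc_const d (hP _ _ Pxy) n1) Kc_sum; apply: eq_bigr => Q _.
  by rewrite andbT.
- by rewrite muln0 big1 // => Q _; rewrite andbF.
Qed.

Lemma pairs_ne (S : {set V}) :
  (\sum_x \sum_y ((x \in S) && (y \in S) && (x != y)) = #|S| * (#|S| - 1))%N.
Proof.
transitivity (\sum_x ((x \in S) : nat) * (#|S| - 1))%N; last by rewrite -big_distrl sum_ind.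
apply: eq_bigr => x _ /=.
case xS: (x \in S) => /=; last by rewrite mul0n big1.
rewrite mul1n (cardsD1 x S) xS add1n subn1 /= -sum_ind.
by apply: eq_bigr => y _; rewrite !inE andbC eq_sym.
Qed.

Lemma pairs_cut (S A : {set V}) :
  (\sum_x \sum_y ((x \in S) && (y \in S) && ((x \in A) && (y \notin A)))
    = #|S :&: A| * #|S :\: A|)%N.
Proof.
rewrite -sum_ind big_distrl; apply: eq_bigr => x _ /=.
rewrite -sum_ind big_distrr; apply: eq_bigr => y _ /=.
rewrite !inE; by case: (x \in S); case: (y \in S); case: (x \in A); case: (y \in A).
Qed.

End DC.

Lemma arith_le (h k F X Y N : nat) : N = (X * Y)%N -> (0 < Y)%N ->
  (h * (Y * Y) <= k * (N * N))%N ->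
  (F * (2 * Y * (2 * Y - 1)) = k * (2 * N * (2 * N - 1)))%N ->
  (h * (2 * N - 1) <= F * (X * (2 * Y - 1)))%N.
Proof.
move=> eN Y0 H1 H2.
rewrite -(@leq_pmul2r (Y * Y)) ?muln_gt0 ?Y0 //.
apply: (@leq_trans (k * (N * N) * (2 * N - 1))).
  by rewrite mulnAC leq_mul2r H1 orbT.
have e : (k * (N * N) * (2 * N - 1) * 2 = F * (X * (2 * Y - 1)) * (Y * Y) * 2)%N.
  have -> : (k * (N * N) * (2 * N - 1) * 2 = k * (2 * N * (2 * N - 1)) * N)%N by ring.
  rewrite -H2 eN. ring.
by move/eqP: e; rewrite eqn_pmul2r // => /eqP ->.
Qed.

Lemma pow2m1 k : (2 : rat) ^+ k - 1 = (2 ^ k - 1)%:R.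
Proof. by rewrite natrB ?expn_gt0 // natrX. Qed.

Lemma pow2m1_neq0 k : (0 < k)%N -> (2 : rat) ^+ k - 1 != 0.
Proof.
move=> k0; rewrite pow2m1 pnatr_eq0 subn_eq0 -ltnNge.
by rewrite -{1}(expn0 2) ltn_exp2l.
Qed.

Definition bnd (n d : nat) : rat := (2 ^ (n - d) * (2 ^ d - 1))%:R / (2 ^ n - 1)%:R.

Lemma gbin_ratio n d : (0 < d)%N -> (d <= n)%N ->
  1 - gbin n.-1 d / gbin n d = bnd n d.
Proof.
move=> d0 dn.
pose f i := (2 : rat) ^+ (n - i) - 1.
pose D i := (2 : rat) ^+ (d - i) - 1.
have e1 : gbin n.-1 d = \prod_(i < d) (f i.+1 / D i).
  apply: eq_bigr => i _; rewrite /f /D; have -> : (n.-1 - i = n - i.+1)%N by lia.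
  by [].
have e2 : gbin n d = \prod_(i < d) (f i / D i) by [].
have fnz : forall i : 'I_d, f i != 0.
  move=> i; apply: pow2m1_neq0; have := ltn_ord i; lia.
have Dnz : \prod_(i < d) D i != 0.
  apply/prodf_neq0 => i _; apply: pow2m1_neq0; have := ltn_ord i; lia.
have Pnz : \prod_(i < d) f i != 0 by apply/prodf_neq0 => i _; apply: fnz.
have f0 : f 0%N != 0 by apply: pow2m1_neq0; lia.
have tele : \prod_(i < d) f i.+1 = \prod_(i < d) f i * f d / f 0%N.
  have h1 := big_ord_recl (op := *%R) (idx := 1) d (fun i : 'I_d.+1 => f i).
  have h2 := big_ord_recr (op := *%R) (idx := 1) d (fun i : 'I_d.+1 => f i).
  rewrite /= in h1 h2. rewrite h1 in h2. apply: (mulfI f0). rewrite [RHS]mulrC mulfVK // -h2; congr (_ * _).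
rewrite e1 e2 !prodf_div tele.
have -> : \prod_(i < d) f i * f d / f 0%N / \prod_(i < d) D i /
    (\prod_(i < d) f i / \prod_(i < d) D i) = f d / f 0%N.
  by field; apply/and3P; split.
have eb : bnd n d = (2 ^+ (n - d) * (2 ^+ d - 1)) / (2 ^+ (n - d) * 2 ^+ d - 1).
  rewrite /bnd natrM -!pow2m1 natrX -exprD subnK //.
have nz : (2 : rat) ^+ (n - d) * 2 ^+ d - 1 != 0.
  by rewrite -exprD subnK // pow2m1_neq0 //; lia.
rewrite eb /f subn0.
have -> : (2 : rat) ^+ n = 2 ^+ (n - d) * 2 ^+ d by rewrite -exprD subnK.
by field.
Qed.

Lemma arith_eq (h k F X Y N : nat) : N = (X * Y)%N -> (0 < Y)%N ->
  (h * (Y * Y) = k * (N * N))%N ->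
  (F * (2 * Y * (2 * Y - 1)) = k * (2 * N * (2 * N - 1)))%N ->
  (h * (2 * N - 1) = F * (X * (2 * Y - 1)))%N.
Proof.
move=> eN Y0 H1 H2.
apply/eqP; rewrite -(@eqn_pmul2r (Y * Y)) ?muln_gt0 ?Y0 //.
have -> : (h * (2 * N - 1) * (Y * Y) = k * (N * N) * (2 * N - 1))%N.
  by rewrite -H1; ring.
have e : (k * (N * N) * (2 * N - 1) * 2 = F * (X * (2 * Y - 1)) * (Y * Y) * 2)%N.
  have -> : (k * (N * N) * (2 * N - 1) * 2 = k * (2 * N * (2 * N - 1)) * N)%N by ring.
  rewrite -H2 eN. ring.
by move/eqP: e; rewrite eqn_pmul2r.
Qed.

Lemma amgm (a b c : nat) : (a + b = 2 * c -> a * b <= c * c)%N.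
Proof. move=> h. rewrite -(@leq_pmul2l 4%N) //.
have -> : (4 * (c * c) = (a + b) * (a + b))%N by rewrite h; lia.
case: (leqP a b) => hab.
- have [t ->] : exists t, b = (a + t)%N by exists (b - a)%N; lia.
  nia.
- have [t ->] : exists t, a = (b + t)%N by exists (a - b)%N; lia.
  nia.
Qed.

Section Main.
Variables (n d : nat).
Hypotheses (hd : (1 < d)%N) (hn : (d <= n)%N).
Local Notation V := 'rV['F_2]_n.
Local Notation F := (flats n d).
Local Notation H := (parity_set n).

Definition hc (A : {set V}) := #|[set Q in F | #|Q :&: A| == (2 ^ d.-1)%N]|.

Lemma hc_sum A : hc A = (\sum_(Q in F) (#|Q :&: A| == (2 ^ d.-1)%N))%N.
Proof.
rewrite /hc -sum1_card [LHS]big_mkcond [RHS]big_mkcond; apply: eq_bigr => Q _.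
by rewrite !inE; case: (is_flat d Q); case: (_ == _).
Qed.

Let n0 : (0 < n)%N. Proof. lia. Qed.
Let i0 : 'I_n := Ordinal n0.
Let e0 : V := delta_mx 0 i0.

Lemma ell_e0 : ell e0 != 0.
Proof.
rewrite /ell (bigD1 i0) //= big1 ?addr0 ?mxE ?eqxx //.
by move=> i /negbTE ni; rewrite mxE eq_sym ni andbF.
Qed.

Lemma e0_nz : (0 : V) != e0.
Proof.
apply/eqP => e; have := ell_e0; rewrite -e /ell.
by rewrite big1 ?eqxx // => i _; rewrite mxE.
Qed.

Let k := Kc d 0 e0.

Lemma cardV : #|[set: V]| = (2 ^ n)%N.
Proof. by rewrite cardsT card_mx card_Fp // mul1n. Qed.

Lemma eq_a : (#|F| * (2 ^ d * (2 ^ d - 1)) = k * (2 ^ n * (2 ^ n - 1)))%N.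
Proof.
have := dc d e0_nz (P := fun x y => x != y) (fun x y h => h).
have := pairs_ne [set: V]; rewrite cardV.
under eq_bigr => x _ do under eq_bigr => y _ do rewrite !in_setT /=.
move=> -> <-.
rewrite -sum_nat_const; apply: eq_bigr => Q fQ.
by rewrite pairs_ne (card_flat fQ).
Qed.

Lemma eq_b A : (\sum_(Q in F) #|Q :&: A| * #|Q :\: A| = k * (#|A| * #|~: A|))%N.
Proof.
have hP : forall x y : V, (x \in A) && (y \notin A) -> x != y.
  move=> x y /andP [xA yA]; apply/eqP => exy; move: yA; by rewrite -exy xA.
have := dc d e0_nz hP.
have := pairs_cut [set: V] A; rewrite setTI setTD.
under eq_bigr => x _ do under eq_bigr => y _ do rewrite !in_setT /=.
move=> -> <-.
by apply: eq_bigr => Q fQ; rewrite pairs_cut.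
Qed.

Lemma half_le A : (hc A * (2 ^ d.-1 * 2 ^ d.-1) <=
   \sum_(Q in F) #|Q :&: A| * #|Q :\: A|)%N.
Proof.
rewrite hc_sum big_distrl leq_sum // => Q fQ /=.
case: eqP => [e|]; last by rewrite mul0n.
rewrite mul1n e; have := cardsID A Q; rewrite (card_flat fQ) e.
have -> : (2 ^ d = 2 ^ d.-1 + 2 ^ d.-1)%N.
  by case: d hd => // m _; rewrite expnS /=; lia.
by move/addnI => ->.
Qed.

Lemma half_eq : (hc H * (2 ^ d.-1 * 2 ^ d.-1) =
   \sum_(Q in F) #|Q :&: H| * #|Q :\: H|)%N.
Proof.
rewrite hc_sum big_distrl; apply: eq_bigr => Q fQ /=.
case: eqP => [e|ne].
- rewrite mul1n e; have := cardsID H Q; rewrite (card_flat fQ) e.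
  have -> : (2 ^ d = 2 ^ d.-1 + 2 ^ d.-1)%N.
    by case: d hd => // m _; rewrite expnS /=; lia.
  by move/addnI => ->.
- rewrite mul0n; have [//|->//] := flat_par (ltnW hd) fQ.
Qed.

Lemma cardH : #|H| = (2 ^ n.-1)%N /\ #|~: H| = (2 ^ n.-1)%N.
Proof.
have := inv_half (S := [set: V]) ell_e0 (fun z _ => in_setT _).
rewrite setTI setTD => e.
have := cardsC H; rewrite -cardsT cardV e.
have -> : (2 ^ n = 2 ^ n.-1 + 2 ^ n.-1)%N.
  by case: n n0 => // m _; rewrite expnS /=; lia.
move=> h; have h' : #|~: H| = (2 ^ n.-1)%N by lia.
by rewrite h'.
Qed.

Lemma main_le A : (hc A * (2 ^ n - 1) <= #|F| * (2 ^ (n - d) * (2 ^ d - 1)))%N.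
Proof.
have eN : (2 ^ n.-1 = 2 ^ (n - d) * 2 ^ d.-1)%N by rewrite -expnD; congr (expn _ _); lia.
have e2d : (2 ^ d = 2 * 2 ^ d.-1)%N by rewrite -expnS; congr (expn _ _); lia.
have e2n : (2 ^ n = 2 * 2 ^ n.-1)%N by rewrite -expnS; congr (expn _ _); lia.
have H1 : (hc A * (2 ^ d.-1 * 2 ^ d.-1) <= k * (2 ^ n.-1 * 2 ^ n.-1))%N.
  apply: (leq_trans (half_le A)); rewrite eq_b leq_mul2l; apply/orP; right.
  have := cardsC A; rewrite -cardsT cardV e2n; apply: amgm.
have := arith_le eN (expn_gt0 _ _) H1.
rewrite -e2d -e2n; move=> /(_ _ eq_a); done.
Qed.

Lemma main_eq : (hc H * (2 ^ n - 1) = #|F| * (2 ^ (n - d) * (2 ^ d - 1)))%N.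
Proof.
have eN : (2 ^ n.-1 = 2 ^ (n - d) * 2 ^ d.-1)%N by rewrite -expnD; congr (expn _ _); lia.
have e2d : (2 ^ d = 2 * 2 ^ d.-1)%N by rewrite -expnS; congr (expn _ _); lia.
have e2n : (2 ^ n = 2 * 2 ^ n.-1)%N by rewrite -expnS; congr (expn _ _); lia.
have H1 : (hc H * (2 ^ d.-1 * 2 ^ d.-1) = k * (2 ^ n.-1 * 2 ^ n.-1))%N.
  by rewrite half_eq eq_b; case: cardH => -> ->.
have := arith_eq eN (expn_gt0 _ _) H1.
rewrite -e2d -e2n; move=> /(_ _ eq_a); done.
Qed.

End Main.

Lemma rat_le (h Fc a b : nat) : (0 < b)%N -> (h * b <= Fc * a)%N ->
  (h%:R / Fc%:R : rat) <= a%:R / b%:R.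
Proof.
move=> b0 hle; case: (posnP Fc) => [->|F0].
  by rewrite invr0 mulr0 divr_ge0 ?ler0n.
rewrite ler_pdivrMr ?ltr0n // mulrAC ler_pdivlMr ?ltr0n //.
by rewrite -!natrM ler_nat [(a * Fc)%N]mulnC.
Qed.

Lemma rat_eq (h Fc a b : nat) : (0 < b)%N -> (0 < Fc)%N -> (h * b = Fc * a)%N ->
  (h%:R / Fc%:R : rat) = a%:R / b%:R.
Proof.
move=> b0 F0 e.
have b0' : (b%:R : rat) != 0 by rewrite pnatr_eq0 -lt0n.
have F0' : (Fc%:R : rat) != 0 by rewrite pnatr_eq0 -lt0n.
apply: (mulIf b0'); apply: (mulIf F0').
rewrite mulfVK // mulrAC mulfVK // -!natrM.
by rewrite e mulnC.
Qed.

Lemma flats_nonempty n d : (d <= n)%N -> (0 < #|flats n d|)%N.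
Proof.
move=> dn; apply/card_gt0P.
exists [set (0 : 'rV['F_2]_n) + v | v in [set v : 'rV['F_2]_n | (v <= (pid_mx d : 'M['F_2]_(d, n)))%MS]].
rewrite inE; apply/existsP; exists 0; apply/existsP; exists (pid_mx d).
rewrite rank_pid_mx // eqxx /=; by apply/eqP.
Qed.

Lemma pow_pos n : (0 < n)%N -> (0 < 2 ^ n - 1)%N.
Proof. by move=> n0; rewrite subn_gt0 -{1}(expn0 2) ltn_exp2l. Qed.

Lemma part1 d n (hd : (1 < d)%N) (hn : (d <= n)%N) (A : {set 'rV['F_2]_n}) :
  lam d (2 ^ d.-1) A <= bnd n d.
Proof.
apply: rat_le; first by apply: pow_pos; lia.
exact: main_le.
Qed.

Lemma part2 d n (hd : (1 < d)%N) (hn : (d <= n)%N) :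
  lam d (2 ^ d.-1) (parity_set n) = bnd n d.
Proof.
apply: rat_eq; first by apply: pow_pos; lia.
  exact: flats_nonempty.
exact: main_eq.
Qed.

Lemma lamstar_eq d n (hd : (1 < d)%N) (hn : (d <= n)%N) :
  lamstar n d (2 ^ d.-1) = bnd n d.
Proof.
apply/eqP; rewrite eq_le; apply/andP; split.
- rewrite /lamstar; apply: (big_ind (fun x => x <= bnd n d)).
  + by rewrite /bnd divr_ge0 ?ler0n.
  + by move=> x y hx hy; rewrite ge_max hx hy.
  + by move=> A _; apply: part1.
- rewrite /lamstar (bigD1 (parity_set n)) //= le_max.
  by rewrite part2 // lexx.
Qed.

Lemma bnd_eq n d : (d <= n)%N ->
  bnd n d = (2 ^+ (n - d) * (2 ^+ d - 1)) / (2 ^+ (n - d) * 2 ^+ d - 1).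
Proof. by move=> dn; rewrite /bnd natrM -!pow2m1 natrX -exprD subnK. Qed.

Lemma part3 d (hd : (1 < d)%N) : lamstar_limit d (2 ^ d.-1) (1 - 2%:R ^- d).
Proof.
move=> eps e0.
have ie0 : 0 <= eps^-1 by rewrite invr_ge0 ltW.
exists (Num.bound eps^-1 + d)%N => n hN.
have dn : (d <= n)%N by lia.
rewrite lamstar_eq // bnd_eq //.
set X : rat := 2 ^+ (n - d); set Y : rat := 2 ^+ d.
have eM : X * Y - 1 = (2 ^ n - 1)%:R by rewrite -exprD subnK // pow2m1.
have Mgt : eps^-1 < X * Y - 1.
  rewrite eM; apply: (lt_le_trans (archi_boundP ie0)); rewrite ler_nat.
  have := ltn_expl n (isT : (1 < 2)%N); lia.
have M0 : 0 < X * Y - 1 by apply: le_lt_trans Mgt.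
have Y1 : 1 < Y by rewrite /Y -natrX (ltr_nat _ 1) -{1}(expn0 2) ltn_exp2l; lia.
have Y0 : 0 < Y by apply: lt_trans Y1.
have ediff : X * (Y - 1) / (X * Y - 1) - (1 - 2%:R ^- d) = (1 - Y^-1) / (X * Y - 1).
  rewrite /Y; field; apply/andP; split; [exact: lt0r_neq0 | by rewrite -/Y gt_eqF].
rewrite ediff ger0_norm; last first.
  apply: divr_ge0; last exact: ltW.
  by rewrite subr_ge0 invf_le1 // ltW.
apply: (le_lt_trans (y := (X * Y - 1)^-1)).
  by rewrite ler_pdivrMr // mulVf ?gt_eqF // gerBl invr_ge0 ltW.
by rewrite -[eps]invrK ltf_pV2 // posrE ?invr_gt0.
Qed.

Unset Implicit Arguments.
Theorem lemma3p1 (d n : nat) (hd : (1 < d)%N) (hn : (d <= n)%N) :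
  (forall A : {set 'rV['F_2]_n},
      lam d (2 ^ d.-1) A <= 1 - gbin n.-1 d / gbin n d)
  /\ lam d (2 ^ d.-1) (parity_set n) = 1 - gbin n.-1 d / gbin n d
  /\ lamstar_limit d (2 ^ d.-1) (1 - 2%:R ^- d).
Proof.
rewrite gbin_ratio //; last by lia.
split; first by move=> A; apply: part1.
split; first by apply: part2.
exact: part3.
Qed.
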